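(* Let $(E_i)_{i\in I}$ be a family of sets and $\mathcal{U}$ a uniform ultrafilter on $I$. Then the set $L=\{x : \{i\in I : x\in E_i\}\in\mathcal{U}\}$ is a diagonal of the family $(E_i)_{i\in I}$.
   Context: An ultrafilter $\mathcal{U}$ on $I$ is uniform if every $X\in\mathcal{U}$ satisfies $|X|=|I|$. For sets $F,M$ put $I[F,M]=\{i\in I: F\cap M=F\cap E_i\}$. A set $D$ is a diagonal of $(E_i)_{i\in I}$ if for every finite set $F$ one has $|I[F,D]|=|I|$. *)

(* Defs.v *)
From HB Require Import structures.
From mathcomp Require Import all_boot.
From mathcomp Require Import boolp classical_sets functions cardinality filter.
Set Implicit Arguments.
Unset Strict Implicit.
Unset Printing Implicit Defensive.
Local Open Scope classical_set_scope.
Local Open Scope card_scope.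

Definition uniform_ultrafilter (I : Type) (U : set_system I) : Prop :=
  UltraFilter U /\ forall X : set I, U X -> (X #= [set: I]).

Definition index_set (I T : Type) (E : I -> set T) (F M : set T) : set I :=
  [set i | F `&` M = F `&` E i].

Definition is_diagonal (I T : Type) (E : I -> set T) (D : set T) : Prop :=
  forall F : set T, finite_set F -> (index_set E F D #= [set: I]).

(* Main.v *)
Require Import Defs.
From mathcomp Require Import all_boot.
From mathcomp Require Import boolp classical_sets functions cardinality filter.
From mathcomp Require finmap.
Local Open Scope classical_set_scope.

Lemma helper_list (I : Type) (T : eqType) (E : I -> set T) (U : set_system I) (L : set T) :
  UltraFilter U -> (forall x, L x <-> U [set i | E i x]) ->
  forall s : list T, U [set i | forall x, x \in s -> (L x <-> E i x)].
Proof.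
move=> UF HL; elim=> [|a s IH].
  by apply: filterS filterT => i _ x; rewrite in_nil.
have Ha : True by [].
clear Ha.
have Ha : U [set i | L a <-> E i a].
  have [La|nLa] := pselect (L a).
    by apply: filterS ((HL a).1 La) => i /= Ei; split.
  have [Ua|Uc] := in_ultra_setVsetC [set i | E i a] UF.
    by exfalso; apply: nLa; apply/(HL a).
  by apply: filterS Uc => i /= nE; split => // /nE.
apply: filterS (filterI Ha IH) => i [/= H1 H2] x; rewrite in_cons => /orP[/eqP->|xs]; first by [].
exact: H2.
Qed.

Theorem mainTheorem6 (I T : Type) (E : I -> set T) (U : set_system I) :
  uniform_ultrafilter U ->
  is_diagonal E [set x | U [set i | E i x]].
Proof.
move=> [UF Hunif] F Ffin.
set L := [set x | U [set i | E i x]].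
pose CT := {classic T}.
have /finite_fsetP[X FX] := (Ffin : @finite_set CT F).
have HU := @helper_list I CT E U L UF (fun x => conj id id) (finmap.enum_fset X).
have Hsub : [set i | forall x, x \in (finmap.enum_fset X) -> (L x <-> E i x)]
    `<=` index_set E F L.
  move=> i /= Hi; rewrite /index_set /=; apply/seteqP; split => x [Fx Hx];
  (split; first by []); move: Fx; rewrite FX /= => xX;
  by apply/(Hi x xX).
apply/card_eqPle; split; first exact: subset_card_le.
apply: card_le_trans (subset_card_le Hsub).
by move/card_eqPle: (Hunif _ HU) => [].
Qed.
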